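(* Let $p$ be a prime, $a,b$ positive integers, $\tau\in\mathbb{Z}$, and $\alpha,\beta\ge0$ integers such that $p^\beta$ exactly divides $\gcd(a,b)$ (i.e. $p^\beta\mid\gcd(a,b)$ but $p^{\beta+1}\nmid\gcd(a,b)$) and $p^\alpha\mid a+b$. Then $p^{\alpha-\beta}$ divides $$\binom{a\tau+a-1}{a}\binom{b\tau+b}{b},$$ i.e. the $p$-adic valuation of this product is at least $\alpha-\beta$.
   Context: For integers $b\geq 0$ and $a\in\mathbb{Z}$ the binomial coefficient is defined by: $\binom{a}{b}=1$ if $b=0$; $\binom{a}{b}$ is the usual binomial coefficient if $b\geq 1$ and $a\geq 0$; and $\binom{a}{b}=(-1)^b\binom{-a+b-1}{b}$ if $b\geq1$ and $a<0$. *)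

(* Defs.v *)
From mathcomp Require Import all_boot all_order all_algebra.
Set Implicit Arguments. Unset Strict Implicit. Unset Printing Implicit Defensive.
Import Order.TTheory GRing.Theory Num.Theory.
Local Open Scope ring_scope.

Definition binz (a : int) (b : nat) : int :=
  if b == 0%N then 1
  else match a with
       | Posz n => ('C(n, b))%:Z
       | Negz n => (-1) ^+ b * ('C(n.+1 + b - 1, b))%:Z
       end.

(* Main.v *)
Require Import Defs.
From mathcomp Require Import all_boot all_order all_algebra.
From mathcomp Require Import zify ring.
Set Implicit Arguments. Unset Strict Implicit. Unset Printing Implicit Defensive.

Lemma logn_fact_M p n M : prime p -> n < M ->
  logn p n`! = \sum_(1 <= k < M) n %/ p ^ k.
Proof.
move=> pp nM; rewrite logn_fact // [RHS](@big_cat_nat _ _ _ n.+1) //=.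
rewrite [X in _ + X]big1_seq ?addn0 // => k /andP[_].
rewrite mem_index_iota => /andP[nk _]; apply: divn_small.
exact: leq_trans nk (ltnW (ltn_expl _ (prime_gt1 pp))).
Qed.

Lemma logn_bin p n k M : prime p -> k <= n -> n < M ->
  logn p 'C(n, k) = \sum_(1 <= i < M) (p ^ i <= k %% p ^ i + (n - k) %% p ^ i).
Proof.
move=> pp kn nM; have := bin_fact kn; move/(congr1 (logn p)).
rewrite !lognM ?bin_gt0 ?fact_gt0 ?muln_gt0 ?fact_gt0 //.
rewrite !(logn_fact_M pp nM) !(logn_fact_M (M:=M) pp); try lia.
have -> : \sum_(1 <= i < M) n %/ p ^ i = \sum_(1 <= i < M) k %/ p ^ i
   + \sum_(1 <= i < M) (n - k) %/ p ^ i + \sum_(1 <= i < M) (p ^ i <= k %% p ^ i + (n - k) %% p ^ i).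
  rewrite -!big_split /=; apply: eq_bigr => i _.
  by rewrite -{1}(subnKC kn) divnD // expn_gt0 prime_gt0.
lia.
Qed.

Lemma carry q a b u v : 1 < q -> q %| a + b -> q %| u.+1 + v -> ~~ (q %| b) ->
  0 < (q <= a %% q + u %% q) + (q <= b %% q + v %% q).
Proof.
move=> q1 hab huv hb.
have q0 : 0 < q by lia.
move: hab huv hb; rewrite /dvdn => /eqP hab /eqP huv hb.
rewrite modnD // in hab; rewrite modnD // in huv.
rewrite -addn1 (modnD _ _ q0) (modn_small q1) in huv.
have := ltn_pmod a q0; have := ltn_pmod b q0; have := ltn_pmod u q0; have := ltn_pmod v q0.
move: hab huv hb.
set ra := a %% q; set rb := b %% q; set ru := u %% q; set rv := v %% q.
case: (leqP q (ra + rb)); case: (leqP q (ru + 1)); case: (leqP q (ra + ru)); case: (leqP q (rb + rv)); simpl; try lia.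
all: case: (leqP q (ru + 1 - q + rv)); case: (leqP q (ru + 1 + rv)); simpl; lia.
Qed.

Lemma arith a b s : 0 < a -> a <= a * s - 1 -> (a * s - 1 - a).+1 + (b * s - b) = (a + b) * (s - 1).
Proof. move=> a0 h; rewrite mulnDl !mulnBr !muln1; move: h; move: (a * s) (b * s) => x y h; lia. Qed.

Lemma bnd1 x y z w : x - 1 < (x + y + z + w).+1. Proof. lia. Qed.
Lemma bnd2 x y z w : y < (x + y + z + w).+1. Proof. lia. Qed.
Lemma bnd3 x y z w al q : al < q -> q <= z + w -> al < (x + y + z + w).+1. Proof. lia. Qed.

Lemma core p a b s alpha beta : prime p -> 0 < a -> 0 < b ->
  p ^ beta %| gcdn a b -> ~~ (p ^ beta.+1 %| gcdn a b) -> p ^ alpha %| a + b ->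
  p ^ (alpha - beta) %| 'C(a * s - 1, a) * 'C(b * s, b).
Proof.
move=> pp a0 b0 hbeta hbeta' halpha.
have [->|Q0] := eqVneq ('C(a * s - 1, a) * 'C(b * s, b)) 0; first exact: dvdn0.
have := Q0; rewrite -lt0n muln_gt0 => /andP[c1 c2].
move: (c1) (c2); rewrite !bin_gt0 => h1 h2.
rewrite pfactor_dvdn ?lt0n // lognM //.
set M := (a * s + b * s + a + b).+1.
rewrite (logn_bin (M:=M) pp h1); last exact: bnd1.
rewrite (logn_bin (M:=M) pp h2); last exact: bnd2.
rewrite -big_split /=.
have [ab|ba] := leqP alpha beta; first by rewrite (eqP (_ : alpha - beta == 0)) ?subn_eq0.
have aM : alpha < M.
  apply: bnd3 (ltn_expl alpha (prime_gt1 pp)) _.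
  by apply: dvdn_leq halpha; rewrite addn_gt0 a0.
have e1 : 1 <= beta.+1 by [].
have e2 : beta.+1 <= M := ltn_trans ba aM.
have e3 : beta.+1 <= alpha.+1 := ltnW ba.
have e4 : alpha.+1 <= M := aM.
rewrite (big_cat_nat e1 e2) /= (big_cat_nat e3 e4) /=.
apply: (leq_trans _ (leq_addl _ _)); apply: (leq_trans _ (leq_addr _ _)).
have -> : alpha - beta = \sum_(beta.+1 <= i < alpha.+1) 1 by rewrite sum_nat_const_nat muln1 subSS.
rewrite big_nat_cond [X in _ <= X]big_nat_cond; apply: leq_sum => i /andP[/andP[hi1 hi2] _].
have q1 : 1 < p ^ i.
  by rewrite -(expn0 p) ltn_exp2l ?prime_gt1 //; exact: leq_ltn_trans (leq0n _) hi1.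
have hq : p ^ i %| a + b := dvdn_trans (dvdn_exp2l p (hi2 : i <= alpha)) halpha.
apply: carry => //.
  rewrite (arith b a0 h1).
  exact: dvdn_mulr.
apply/negP => hb; move/negP: hbeta'; apply.
apply: dvdn_trans (dvdn_exp2l p (hi1 : beta.+1 <= i)) _.
by rewrite dvdn_gcd hb -(dvdn_addl _ hb) hq.
Qed.

Unset Implicit Arguments.
Import Order.TTheory GRing.Theory Num.Theory.
Local Open Scope ring_scope.

Lemma eq1 (a n : nat) : (0 < a)%N -> a%:Z * n%:Z + a%:Z - 1 = Posz (a * n.+1 - 1).
Proof.
move=> a0; have h : (1 <= a * n.+1)%N by rewrite muln_gt0 a0.
rewrite -subzn // PoszM -addn1 PoszD; ring.
Qed.

Lemma eq2 (b n : nat) : b%:Z * n%:Z + b%:Z = Posz (b * n.+1).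
Proof. rewrite PoszM -addn1 PoszD; ring. Qed.

Lemma eq3 (a m : nat) : a%:Z * Negz m.+1 + a%:Z - 1 = Negz (a * m.+1).
Proof. rewrite !NegzE -[m.+2]addn2 -[(a * m.+1).+1]addn1 -[m.+1]addn1 !PoszD PoszM PoszD; ring. Qed.

Lemma eq4 (b m : nat) : (0 < b)%N -> b%:Z * Negz m.+1 + b%:Z = Negz (b * m.+1 - 1).
Proof.
move=> b0; have h : (1 <= b * m.+1)%N by rewrite muln_gt0 b0.
rewrite !NegzE subn1 prednK // -[m.+2]addn2 -[m.+1]addn1 !PoszD !PoszM PoszD; ring.
Qed.

Lemma eq5 (b : nat) : b%:Z * Negz 0 + b%:Z = 0.
Proof. rewrite NegzE; ring. Qed.

Theorem lemma4p1 (p : nat) (a b : nat) (tau : int) (alpha beta : nat)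
  (hp : prime p) (ha : (0 < a)%N) (hb : (0 < b)%N)
  (hbeta : (p ^ beta %| gcdn a b)%N)
  (hbeta' : ~~ (p ^ beta.+1 %| gcdn a b)%N)
  (halpha : (p ^ alpha %| a + b)%N) :
  ((p ^ (alpha - beta))%N%:Z %|
     binz (a%:Z * tau + a%:Z - 1) a * binz (b%:Z * tau + b%:Z) b)%Z.
Proof.
have anz : (a == 0)%N = false by rewrite eqn0Ngt ha.
have bnz : (b == 0)%N = false by rewrite eqn0Ngt hb.
case: tau => [n|[|m]].
- rewrite eq1 // eq2 /binz anz bnz -PoszM dvdzE /=.
  exact: core.
- by rewrite (eq5 b) /binz bnz /= bin0n bnz mulr0 dvdz0.
- rewrite eq3 eq4 // /binz anz bnz dvdzE !abszM !abszX /= !exp1n !mul1n.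
  have -> : ((a * m.+1).+1 + a - 1 = a * m.+2)%N.
    by rewrite addSn subn1 /= [in RHS]mulnS addnC.
  have -> : ((b * m.+1 - 1).+1 + b - 1 = b * m.+2 - 1)%N.
    have h : (0 < b * m.+1)%N by rewrite muln_gt0 hb.
    have -> : ((b * m.+1 - 1).+1 = b * m.+1)%N by rewrite subn1 prednK.
    by rewrite [in RHS]mulnS addnC.
  by rewrite mulnC; apply: core; rewrite // ?(gcdnC b a) ?(addnC b a).
Qed.
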